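(* Let $\mathcal{X}=\mathcal{X}^{(1)}\times\cdots\times\mathcal{X}^{(d)}$ with each $\mathcal{X}^{(j)}$ finite, and let $(S_i)_{i=1}^n$ be a partition of $\{1,\dots,d\}$ into pairwise disjoint nonempty sets. Let $\pi\in\mathcal{P}(\mathcal{X})$ be positive, $P\in\mathcal{L}(\mathcal{X})$ and $L_i\in\mathcal{L}(\mathcal{X}^{(S_i)})$ for $i=1,\dots,n$. Then $D^\pi_{KL}(P\|\otimes_{i=1}^nL_i)=D^\pi_{KL}(P\|\otimes_{i=1}^nP^{(S_i)}_\pi)+D^\pi_{KL}(\otimes_{i=1}^nP^{(S_i)}_\pi\|\otimes_{i=1}^nL_i)=D^\pi_{KL}(P\|\otimes_{i=1}^nP^{(S_i)}_\pi)+\sum_{i=1}^nD^{\pi^{(S_i)}}_{KL}(P^{(S_i)}_\pi\|L_i)$. Consequently $\otimes_{i=1}^nP^{(S_i)}_\pi$ is the unique minimizer and $\min_{L_i\in\mathcal{L}(\mathcal{X}^{(S_i)})}D^\pi_{KL}(P\|\otimes_{i=1}^nL_i)=D^\pi_{KL}(P\|\otimes_{i=1}^nP^{(S_i)}_\pi)$.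
   Context: $\mathcal{P}(\Omega),\mathcal{L}(\Omega)$: probability masses and transition matrices on finite $\Omega$. $D_{KL}^{\pi}(M\|L):=\sum_{x,y}\pi(x)M(x,y)\ln\frac{M(x,y)}{L(x,y)}$. For $S\subseteq\{1,\dots,d\}$: $\mathcal{X}^{(S)}=\prod_{j\in S}\mathcal{X}^{(j)}$, $x^{(S)}=(x^j)_{j\in S}$, $x^{(-S)}=(x^j)_{j\notin S}$, $\pi^{(S)}(x^{(S)})=\sum_{x^{(-S)}}\pi(x)$, $P^{(S)}_\pi(x^{(S)},y^{(S)}):=\frac{\sum_{x^{(-S)},y^{(-S)}}\pi(x)P(x,y)}{\pi^{(S)}(x^{(S)})}$. For $L_i\in\mathcal{L}(\mathcal{X}^{(S_i)})$, $(\otimes_{i=1}^nL_i)(x,y):=\prod_{i=1}^nL_i(x^{(S_i)},y^{(S_i)})$. *)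

(* Defs.v *)
From HB Require Import structures.
From mathcomp Require Import all_boot all_order all_algebra.
From mathcomp Require Import reals constructive_ereal ereal exp.
Set Implicit Arguments. Unset Strict Implicit. Unset Printing Implicit Defensive.
Import Order.TTheory GRing.Theory Num.Theory.
Local Open Scope ring_scope.

Definition is_pos_pmf (R : realType) (T : finType) (p : T -> R) : Prop :=
  (forall x, 0 < p x) /\ \sum_(x : T) p x = 1.

Definition is_trans (R : realType) (T : finType) (M : T -> T -> R) : Prop :=
  (forall x y, 0 <= M x y) /\ (forall x, \sum_(y : T) M x y = 1).

(* One term pi(x) M(x,y) ln (M(x,y)/L(x,y)) with the usual conventions:
   0 when pi(x) M(x,y) = 0, +oo when pi(x) M(x,y) > 0 and L(x,y) = 0. *)
Definition KL_term (R : realType) (a m l : R) : \bar R :=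
  if a * m == 0 then 0%E
  else if l == 0 then +oo%E
  else (a * m * ln (m / l))%:E.

Definition KLdiv (R : realType) (T : finType) (pi : T -> R) (M L : T -> T -> R)
  : \bar R :=
  (\sum_(x : T) \sum_(y : T) KL_term (pi x) (M x y) (L x y))%E.

(* State spaces: X = X^(1) x ... x X^(d) (coordinates indexed by 'I_d),
   and X^(S) = prod_{j in S} X^(j). *)
Definition full (d : nat) (X : 'I_d -> finType) : finType :=
  {dffun forall j : 'I_d, X j}.

Definition sub (d : nat) (X : 'I_d -> finType) (S : {set 'I_d}) : finType :=
  {dffun forall j : {j : 'I_d | j \in S}, X (proj1_sig j)}.

Definition restr (d : nat) (X : 'I_d -> finType) (S : {set 'I_d})
  (x : full X) : sub X S :=
  [ffun j : {j : 'I_d | j \in S} => x (proj1_sig j)].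

Arguments restr {d X} S x.

Definition marg (R : realType) (d : nat) (X : 'I_d -> finType) (S : {set 'I_d})
  (pi : full X -> R) (u : sub X S) : R :=
  \sum_(x : full X | restr S x == u) pi x.

Arguments marg {R d X} S pi u.

Definition Pmarg (R : realType) (d : nat) (X : 'I_d -> finType) (S : {set 'I_d})
  (pi : full X -> R) (P : full X -> full X -> R) (u v : sub X S) : R :=
  (\sum_(x : full X | restr S x == u) \sum_(y : full X | restr S y == v)
      pi x * P x y) / marg S pi u.

Arguments Pmarg {R d X} S pi P u v.

Definition tens (R : realType) (d n : nat) (X : 'I_d -> finType)
  (S : 'I_n -> {set 'I_d}) (L : forall i : 'I_n, sub X (S i) -> sub X (S i) -> R)
  (x y : full X) : R :=
  \prod_(i < n) L i (restr (S i) x) (restr (S i) y).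

Arguments tens {R d n X S} L x y.

Definition is_partition (d n : nat) (S : 'I_n -> {set 'I_d}) : Prop :=
  (forall i, S i != set0) /\
  (forall i j, i != j -> [disjoint S i & S j]) /\
  (\bigcup_(i < n) S i = [set: 'I_d]).

(* Main.v *)
Require Import Defs.
From HB Require Import structures.
From mathcomp Require Import all_boot all_order all_algebra.
From mathcomp Require Import reals constructive_ereal ereal exp.
Set Implicit Arguments. Unset Strict Implicit. Unset Printing Implicit Defensive.
Import Order.TTheory GRing.Theory Num.Theory.
Local Open Scope ring_scope.



Section Comb.
Variables (d : nat) (X : 'I_d -> finType).

Lemma ext_ex (S0 : {set 'I_d}) (u : sub X S0) (x0 : full X) :
  exists x : full X, restr S0 x = u.
Proof.
have H : forall k, {a : X k | forall p : k \in S0, u (exist _ k p) = a}.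
  move=> k; have [p|np] : ((k \in S0) + ~~ (k \in S0))%type.
    by case: (k \in S0); [left|right].
    by exists (u (exist _ k p)) => p'; rewrite (bool_irrelevance p' p).
  by exists (x0 k) => p; rewrite p in np.
exists (finfun (fun k => sval (H k)) : full X).
apply/ffunP => -[k p]; rewrite !ffunE /=.
by rewrite (svalP (H k) p).
Qed.

Variables (n : nat) (S : 'I_n -> {set 'I_d}).
Hypothesis hpart : is_partition S.

Definition Ts (j : 'I_n) : finType := sub X (S j).
Definition Rf (y : full X) : fprod Ts := fprod_of_fun (fun j => restr (S j) y).

Lemma glue_sub (t : fprod Ts) k :
  {a : X k | forall j (p : k \in S j), t j (exist _ k p) = a}.
Proof.
case: (pickP (fun j => k \in S j)) => [j p|none].
  exists (t j (exist _ k p)) => j' p'.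
  have ejj : j' = j.
    apply/eqP; apply: contraT => ne.
    case: hpart => _ [hdis _].
    by move: (hdis _ _ ne) => /disjointFr; move/(_ k p'); rewrite p.
  subst j'; by rewrite (bool_irrelevance p' p).
exfalso; case: hpart => _ [_ hcov].
have : k \in \bigcup_(i < n) S i by rewrite hcov inE.
by case/bigcupP => j _ kj; move: (none j); rewrite kj.
Qed.

Definition glue (t : fprod Ts) : full X := finfun (fun k => sval (glue_sub t k)).

Lemma RfK : cancel Rf glue.
Proof.
move=> y; apply/ffunP => k; rewrite ffunE.
case: (glue_sub (Rf y) k) => a /= Ha.
case: hpart => _ [_ hcov].
have : k \in \bigcup_(i < n) S i by rewrite hcov inE.
case/bigcupP => j _ kj.
by rewrite -(Ha j kj) /Rf fprodE ffunE.
Qed.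

Lemma glueK : cancel glue Rf.
Proof.
move=> t; apply/fprodP => j; rewrite /Rf fprodE.
apply/ffunP => -[k p]; rewrite ffunE /= ffunE.
by case: (glue_sub t k) => a /= Ha; rewrite Ha.
Qed.

End Comb.



Section Prod.
Variables (R : realType) (d : nat) (X : 'I_d -> finType).
Variables (n : nat) (S : 'I_n -> {set 'I_d}).
Hypothesis hpart : is_partition S.

Lemma sum_prod (f : forall j, Ts X S j -> R) :
  \sum_(y : full X) \prod_j f j (restr (S j) y) = \prod_j \sum_(v : Ts X S j) f j v.
Proof.
rewrite (reindex (glue hpart)); last first.
  by exists (Rf S) => t _; [apply: glueK | apply: RfK].
transitivity (\sum_(t : fprod (Ts X S)) \prod_j [ffun v => f j v] (t j)).
  apply: eq_bigr => t _; apply: eq_bigr => j _; rewrite ffunE.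
  congr (f j _).
  by rewrite -[in RHS](glueK hpart t) /Rf fprodE.
have E := big_fprod 1 (+%R : Monoid.add_law 0 (@GRing.mul R)) (fun j => [ffun v => f j v]).
rewrite (eq_bigr (fun t : fprod (Ts X S) => \prod_(j in 'I_n) [ffun v => f j v] (t j))); last first.
  by move=> t _; apply: eq_bigl.
rewrite E /=.
rewrite [RHS](eq_bigr (fun j => \sum_(v in tagged_with (Ts X S) j) untag 0 ([ffun v => f j v]) v)); last first.
  move=> j _.
  rewrite (big_tag (op := (+%R : Monoid.com_law 0)) f j).
  by apply: eq_bigr => v _; rewrite /untag; case: eqP => // e; rewrite ffunE.
rewrite [RHS]bigA_distr_big_dep.
by apply: eq_bigl.
Qed.


Lemma sum_prod_one (f : forall j, Ts X S j -> R) i (g : Ts X S i -> R) :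
  (forall j, j != i -> \sum_(v : Ts X S j) f j v = 1) ->
  \sum_(y : full X) (\prod_j f j (restr (S j) y)) * g (restr (S i) y)
  = \sum_(v : Ts X S i) f i v * g v.
Proof.
move=> h1.
pose h := dfwith (T := fun j => Ts X S j -> R) f (fun v => f i v * g v).
transitivity (\sum_(y : full X) \prod_j h j (restr (S j) y)).
  apply: eq_bigr => y _.
  rewrite [RHS](bigD1 i) //= [in LHS](bigD1 i) //= /h dfwith_in.
  rewrite [in RHS](eq_bigr (fun j => f j (restr (S j) y))); last first.
    by move=> j ji; rewrite dfwith_out // eq_sym.
  by rewrite mulrAC.
rewrite sum_prod [LHS](bigD1 i) //= /h dfwith_in [X in _ * X]big1 ?mulr1 //.
by move=> j ji; rewrite dfwith_out 1?eq_sym // h1.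
Qed.

End Prod.



Section Marg.
Variables (R : realType) (d : nat) (X : 'I_d -> finType).
Variables (pi : full X -> R) (P : full X -> full X -> R).
Hypothesis hpi : is_pos_pmf pi.
Hypothesis hP : is_trans P.

Lemma pi_ge0 x : 0 <= pi x. Proof. by case: hpi => h _; exact/ltW. Qed.
Lemma piP_ge0 x y : 0 <= pi x * P x y.
Proof. by case: hP => h _; rewrite mulr_ge0 // pi_ge0. Qed.

Lemma fiber (S0 : {set 'I_d}) (F : full X -> R) :
  \sum_x F x = \sum_(u : sub X S0) \sum_(x | restr S0 x == u) F x.
Proof. by rewrite (partition_big (fun x => restr S0 x) xpredT). Qed.

Lemma full_inhab : exists x0 : full X, True.
Proof.
case: (pickP (@predT (full X))) => [x0 _|none]; first by exists x0.
case: hpi => _; rewrite big_pred0 // => h.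
by move: (@oner_neq0 R); rewrite h eqxx.
Qed.

Lemma marg_gt0 S0 u : 0 < marg S0 pi u.
Proof.
case: full_inhab => x0 _; case: (ext_ex u x0) => x hx.
rewrite /marg (bigD1 x) ?hx //=.
apply: (lt_le_trans (proj1 hpi x)); rewrite lerDl; apply: sumr_ge0 => *; exact: pi_ge0.
Qed.

Definition N S0 (u v : sub X S0) :=
  \sum_(x : full X | restr S0 x == u) \sum_(y : full X | restr S0 y == v) pi x * P x y.

Lemma margPmarg S0 u v : marg S0 pi u * Pmarg S0 pi P u v = N u v.
Proof.
by rewrite /Pmarg mulrC divfK // gt_eqF // marg_gt0.
Qed.

Lemma N_ge0 S0 u v : 0 <= N (S0:=S0) u v.
Proof. by apply: sumr_ge0 => x _; apply: sumr_ge0 => y _; exact: piP_ge0. Qed.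

Lemma sumN S0 u : \sum_v N (S0:=S0) u v = marg S0 pi u.
Proof.
rewrite /N exchange_big /=; apply: eq_bigr => x _.
rewrite -(fiber S0 (fun y => pi x * P x y)) -mulr_sumr.
by case: hP => _ ->; rewrite mulr1.
Qed.

Lemma PS_trans S0 : is_trans (Pmarg S0 pi P).
Proof.
split=> [u v|u].
  by rewrite /Pmarg divr_ge0 ?N_ge0 // ltW // marg_gt0.
by rewrite /Pmarg -mulr_suml sumN divff // gt_eqF // marg_gt0.
Qed.

Lemma N_pos S0 x y : pi x * P x y != 0 ->
  Pmarg S0 pi P (restr S0 x) (restr S0 y) != 0.
Proof.
move=> h; rewrite /Pmarg mulf_neq0 //; last by rewrite invr_eq0 gt_eqF // marg_gt0.
change (N (restr S0 x) (restr S0 y) != 0).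
have: pi x * P x y <= N (restr S0 x) (restr S0 y).
  rewrite /N (bigD1 x) //= (bigD1 y) //= -addrA lerDl.
  apply: addr_ge0; first by apply: sumr_ge0 => *; exact: piP_ge0.
  by apply: sumr_ge0 => *; apply: sumr_ge0 => *; exact: piP_ge0.
have := piP_ge0 x y; rewrite le_eqVlt eq_sym (negbTE h) /= => h1 h2.
by rewrite gt_eqF // (lt_le_trans h1 h2).
Qed.

Lemma N_ex S0 u v : Pmarg S0 pi P u v != 0 ->
  exists x y, [/\ restr S0 x = u, restr S0 y = v & pi x * P x y != 0].
Proof.
move=> h.
have /existsP[x /existsP[y /and3P[/eqP hx /eqP hy hxy]]] :
  [exists x, exists y, [&& restr S0 x == u, restr S0 y == v & pi x * P x y != 0]].
  apply: contraNT h => /existsPn hn; apply/eqP.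
  rewrite /Pmarg big1 ?mul0r // => x /eqP hx; rewrite big1 // => y /eqP hy.
  by move: (hn x) => /existsPn /(_ y); rewrite hx hy !eqxx /= negbK => /eqP.
by exists x, y.
Qed.

Lemma M1 S0 (F : sub X S0 -> R) :
  \sum_x pi x * F (restr S0 x) = \sum_u marg S0 pi u * F u.
Proof.
rewrite (fiber S0); apply: eq_bigr => u _; rewrite /marg mulr_suml.
by apply: eq_bigr => x /eqP ->.
Qed.

Lemma M2 S0 (F : sub X S0 -> sub X S0 -> R) :
  \sum_x \sum_y pi x * P x y * F (restr S0 x) (restr S0 y)
  = \sum_u \sum_v marg S0 pi u * Pmarg S0 pi P u v * F u v.
Proof.
rewrite (fiber S0); apply: eq_bigr => u _.
under [RHS]eq_bigr => v _ do rewrite margPmarg /N mulr_suml.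
rewrite [RHS]exchange_big /=; apply: eq_bigr => x /eqP hx.
rewrite (fiber S0); apply: eq_bigr => v _; rewrite mulr_suml.
by apply: eq_bigr => y /eqP hy; rewrite hx hy.
Qed.

End Marg.



Section Gen.
Variable R : realType.

Lemma KL_termE (a m l : R) : (a * m != 0 -> l != 0) ->
  KL_term a m l = (a * m * ln (m / l))%:E.
Proof.
rewrite /KL_term; case: eqP => [->|_ h]; first by rewrite mul0r.
by rewrite (negbTE (h isT)).
Qed.

Lemma KL_term_oo (a m l : R) : a * m != 0 -> l = 0 -> KL_term a m l = +oo%E.
Proof. by rewrite /KL_term => /negbTE -> ->; rewrite eqxx. Qed.

Lemma KL_term_nNy (a m l : R) : KL_term a m l != -oo%E.
Proof. by rewrite /KL_term; case: ifP => //; case: ifP. Qed.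

Lemma esum_nNy (I : finType) (f : I -> \bar R) :
  (forall i, f i != -oo%E) -> (\sum_i f i != -oo)%E.
Proof.
move=> h; rewrite esum_eqNy; apply/existsPn => i; by rewrite (negbTE (h i)).
Qed.

Lemma esum_oo (I : finType) (f : I -> \bar R) i :
  (forall j, f j != -oo%E) -> f i = +oo%E -> (\sum_j f j = +oo)%E.
Proof.
move=> h hi; apply/eqP; rewrite esum_eqy; last by move=> j _; exact: h.
by apply/existsP; exists i; rewrite hi eqxx.
Qed.

Lemma KLdiv_nNy (T : finType) (pi : T -> R) M L : KLdiv pi M L != -oo%E.
Proof. by apply: esum_nNy => x; apply: esum_nNy => y; exact: KL_term_nNy. Qed.

Lemma KLdiv_oo (T : finType) (pi : T -> R) M L x y :
  pi x * M x y != 0 -> L x y = 0 -> KLdiv pi M L = +oo%E.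
Proof.
move=> h1 h2; apply: (@esum_oo _ _ x) => [j|].
  by apply: esum_nNy => y'; exact: KL_term_nNy.
apply: (@esum_oo _ _ y) => [j|]; first exact: KL_term_nNy.
exact: KL_term_oo.
Qed.

Lemma KLdivE (T : finType) (pi : T -> R) M L :
  (forall x y, pi x * M x y != 0 -> L x y != 0) ->
  KLdiv pi M L = (\sum_x \sum_y pi x * M x y * ln (M x y / L x y))%:E.
Proof.
move=> h; rewrite /KLdiv -sumEFin; apply: eq_bigr => x _.
rewrite -sumEFin; apply: eq_bigr => y _; exact: KL_termE (h x y).
Qed.

Lemma ln_prod (I : finType) (f : I -> R) :
  (forall i, 0 < f i) -> ln (\prod_i f i) = \sum_i ln (f i).
Proof.
move=> h.
have : 0 < \prod_i f i /\ ln (\prod_i f i) = \sum_i ln (f i).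
  apply: (big_ind2 (fun a b => 0 < a /\ ln a = b)).
  - by rewrite ln1 ltr01.
  - move=> a1 b1 a2 b2 [h1 e1] [h2 e2]; split; first exact: mulr_gt0.
    by rewrite lnM ?posrE // e1 e2.
  - by move=> i _; split.
by case.
Qed.

Lemma ln_le (z : R) : 0 < z -> ln z <= z - 1.
Proof.
move=> hz; have := expR_ge1Dx (ln z); rewrite lnK ?posrE //.
by rewrite lerBrDl addrC.
Qed.

Lemma ln_lt (z : R) : 0 < z -> z != 1 -> ln z < z - 1.
Proof.
move=> hz hz1; have := @expR_gt1Dx R (ln z).
rewrite ln_eq0 // hz1 lnK ?posrE // => /(_ isT).
by rewrite ltrBrDl addrC.
Qed.

Lemma gibbs_term (a p q : R) : 0 < a -> 0 <= p -> 0 <= q -> (p != 0 -> q != 0) ->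
  a * (p - q) <= a * p * ln (p / q) /\
  (a * p * ln (p / q) = a * (p - q) -> q = p).
Proof.
move=> ha hp hq hpq.
have [->|p0] := eqVneq p 0.
  rewrite mulr0 mul0r add0r; split; first by rewrite mulrN oppr_le0 mulr_ge0 // ltW.
  by move=> /esym /eqP; rewrite mulrN oppr_eq0 mulf_eq0 gt_eqF //= => /eqP.
have pp : 0 < p by rewrite lt_def p0.
have qp : 0 < q by rewrite lt_def hpq.
have e : ln (p / q) = - ln (q / p).
  by rewrite -lnV ?posrE ?divr_gt0 // invf_div.
have e2 : a * (p - q) = a * p * (1 - q / p).
  by rewrite [RHS]mulrBr mulr1 mulrBr -[a * p * _]mulrA [p * _]mulrCA mulfV // mulr1.
rewrite e e2; split.
  rewrite ler_pM2l ?mulr_gt0 // lerNr opprB; exact: ln_le (divr_gt0 qp pp).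
move=> /mulfI; rewrite gt_eqF ?mulr_gt0 // => /(_ isT) h.
apply/eqP; apply: contraT => nq.
have : ln (q / p) < q / p - 1.
  apply: ln_lt; first exact: divr_gt0.
  by apply: contra nq => /eqP hh; apply/eqP; rewrite -(divfK p0 q) hh mul1r.
by rewrite -[X in X < _]opprK h opprB ltxx.
Qed.

Lemma gibbs (U : finType) (a : U -> R) (p q : U -> U -> R) :
  (forall u, 0 < a u) -> is_trans p -> is_trans q ->
  (forall u v, p u v != 0 -> q u v != 0) ->
  0 <= \sum_u \sum_v a u * p u v * ln (p u v / q u v) /\
  (\sum_u \sum_v a u * p u v * ln (p u v / q u v) = 0 -> forall u v, q u v = p u v).
Proof.
move=> ha [p0 p1] [q0 q1] hpq.
pose D u v := a u * p u v * ln (p u v / q u v) - a u * (p u v - q u v).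
have D0 u v : 0 <= D u v by rewrite subr_ge0; case: (gibbs_term (ha u) (p0 u v) (q0 u v) (hpq u v)).
have sumz : \sum_u \sum_v a u * (p u v - q u v) = 0.
  by apply: big1 => u _; rewrite -mulr_sumr sumrB p1 q1 subrr mulr0.
have eq : \sum_u \sum_v a u * p u v * ln (p u v / q u v) = \sum_u \sum_v D u v.
  rewrite /D; under [RHS]eq_bigr => u _ do rewrite sumrB.
  by rewrite sumrB sumz subr0.
rewrite eq; split; first by apply: sumr_ge0 => u _; apply: sumr_ge0.
move=> /eqP; rewrite psumr_eq0; last by move=> u _; apply: sumr_ge0.
move=> /allP hall u v.
have := hall u (mem_index_enum u); rewrite implyTb psumr_eq0 // => /allP /(_ v (mem_index_enum v)).
rewrite implyTb /D subr_eq0 => /eqP h.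
by case: (gibbs_term (ha u) (p0 u v) (q0 u v) (hpq u v)) => _; apply.
Qed.

End Gen.



Section Main.
Variables (R : realType) (d : nat) (X : 'I_d -> finType) (n : nat).
Variables (S : 'I_n -> {set 'I_d}) (pi : full X -> R) (P : full X -> full X -> R).
Hypothesis hpart : is_partition S.
Hypothesis hpi : is_pos_pmf pi.
Hypothesis hP : is_trans P.

Definition PSd := fun i : 'I_n => Pmarg (S i) pi P.
Arguments PSd : clear implicits.

Definition Good (L : forall i : 'I_n, Ts X S i -> Ts X S i -> R) :=
  [forall i : 'I_n, forall u : Ts X S i, forall v : Ts X S i,
    (PSd i u v != 0) ==> (L i u v != 0)].

Lemma goodP L : Good L -> forall i u v, PSd i u v != 0 -> L i u v != 0.
Proof.
by move=> /forallP h i u v; move: (h i) => /forallP /(_ u) /forallP /(_ v) /implyP.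
Qed.

Definition KR0 := \sum_x \sum_y pi x * P x y * ln (P x y / tens PSd x y).
Definition KR1 (L : forall i : 'I_n, Ts X S i -> Ts X S i -> R) := \sum_x \sum_y pi x * P x y * ln (P x y / tens L x y).
Definition KR2 (L : forall i : 'I_n, Ts X S i -> Ts X S i -> R) := \sum_x \sum_y pi x * tens PSd x y * ln (tens PSd x y / tens L x y).
Definition KRi (L : forall i : 'I_n, Ts X S i -> Ts X S i -> R) i :=
  \sum_u \sum_v marg (S i) pi u * PSd i u v * ln (PSd i u v / L i u v).

Lemma PSd_ge0 i u v : 0 <= PSd i u v.
Proof. by case: (PS_trans hpi hP (S i)) => h _; apply: h. Qed.

Lemma E0 : KLdiv pi P (tens PSd) = KR0%:E.
Proof.
apply: KLdivE => x y h; apply/prodf_neq0 => i _; exact: N_pos.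
Qed.

Lemma E1 L : Good L -> KLdiv pi P (tens L) = (KR1 L)%:E.
Proof.
move=> g; apply: KLdivE => x y h; apply/prodf_neq0 => i _.
by apply: (goodP g); exact: N_pos.
Qed.

Lemma E2 L : Good L -> KLdiv pi (tens PSd) (tens L) = (KR2 L)%:E.
Proof.
move=> g; apply: KLdivE => x y.
rewrite mulf_eq0 negb_or => /andP[_ /prodf_neq0 hh].
by apply/prodf_neq0 => i _; apply: (goodP g); exact: hh.
Qed.

Lemma Ei L i : Good L -> KLdiv (marg (S i) pi) (PSd i) (L i) = (KRi L i)%:E.
Proof.
move=> g; apply: KLdivE => u v.
rewrite mulf_eq0 negb_or => /andP[_ hh].
exact: (goodP g).
Qed.

Lemma R1 L : (forall i, is_trans (L i)) -> Good L ->
  KR1 L = KR0 + \sum_i KRi L i.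
Proof.
move=> hL g.
have term x y : pi x * P x y * ln (P x y / tens L x y) =
   pi x * P x y * ln (P x y / tens PSd x y) +
   \sum_i pi x * P x y * ln (PSd i (restr (S i) x) (restr (S i) y) /
                              L i (restr (S i) x) (restr (S i) y)).
  have [h0|h] := eqVneq (pi x * P x y) 0.
    by rewrite h0 !mul0r add0r big1 // => i _; rewrite mul0r.
  have Pp : 0 < P x y.
    by rewrite lt_def; move: h; rewrite mulf_eq0 negb_or => /andP[_ ->]; case: hP => ->.
  have PSp i : 0 < PSd i (restr (S i) x) (restr (S i) y).
    by rewrite lt_def PSd_ge0 andbT; exact: N_pos.
  have Lp i : 0 < L i (restr (S i) x) (restr (S i) y).
    by rewrite lt_def; case: (hL i) => -> _; rewrite andbT; apply: (goodP g); exact: N_pos.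
  have pPS : 0 < tens PSd x y by apply: prodr_gt0 => i _.
  have pL : 0 < tens L x y by apply: prodr_gt0 => i _.
  rewrite -mulr_sumr -mulrDr; congr (_ * _).
  rewrite !ln_div ?posrE // /tens !ln_prod //.
  rewrite [X in _ = _ + X](eq_bigr (fun i => ln (PSd i (restr (S i) x) (restr (S i) y)) - ln (L i (restr (S i) x) (restr (S i) y)))); last first.
    by move=> i _; rewrite ln_div ?posrE.
  by rewrite sumrB addrA subrK.
transitivity (\sum_x \sum_y (pi x * P x y * ln (P x y / tens PSd x y) +
   \sum_i pi x * P x y * ln (PSd i (restr (S i) x) (restr (S i) y) /
                              L i (restr (S i) x) (restr (S i) y)))).
  by apply: eq_bigr => x _; apply: eq_bigr => y _; exact: term.
under eq_bigr => x _ do rewrite big_split /=.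
rewrite big_split /=; congr (_ + _).
under eq_bigr => x _ do rewrite exchange_big.
rewrite exchange_big; apply: eq_bigr => i _.
exact: (M2 P hpi (S0 := S i) (fun u v => ln (PSd i u v / L i u v))).
Qed.

Lemma R2 L : (forall i, is_trans (L i)) -> Good L ->
  KR2 L = \sum_i KRi L i.
Proof.
move=> hL g.
have term x y : pi x * tens PSd x y * ln (tens PSd x y / tens L x y) =
   \sum_i pi x * tens PSd x y * ln (PSd i (restr (S i) x) (restr (S i) y) /
                              L i (restr (S i) x) (restr (S i) y)).
  have [h0|h] := eqVneq (pi x * tens PSd x y) 0.
    by rewrite h0 !mul0r big1 // => i _; rewrite mul0r.
  move: (h); rewrite mulf_eq0 negb_or => /andP[_ /prodf_neq0 hh].
  have PSp i : 0 < PSd i (restr (S i) x) (restr (S i) y).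
    by rewrite lt_def PSd_ge0 andbT; exact: hh.
  have Lp i : 0 < L i (restr (S i) x) (restr (S i) y).
    by rewrite lt_def; case: (hL i) => -> _; rewrite andbT; apply: (goodP g); exact: hh.
  have pPS : 0 < tens PSd x y by apply: prodr_gt0 => i _.
  have pL : 0 < tens L x y by apply: prodr_gt0 => i _.
  rewrite -mulr_sumr; congr (_ * _).
  rewrite !ln_div ?posrE // /tens !ln_prod //.
  rewrite [RHS](eq_bigr (fun i => ln (PSd i (restr (S i) x) (restr (S i) y)) - ln (L i (restr (S i) x) (restr (S i) y)))); last first.
    by move=> i _; rewrite ln_div ?posrE.
  by rewrite sumrB.
transitivity (\sum_x \sum_y \sum_i pi x * tens PSd x y *
     ln (PSd i (restr (S i) x) (restr (S i) y) / L i (restr (S i) x) (restr (S i) y))).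
  by apply: eq_bigr => x _; apply: eq_bigr => y _; exact: term.
under eq_bigr => x _ do rewrite exchange_big.
rewrite exchange_big; apply: eq_bigr => i _.
pose G (u v : Ts X S i) := ln (PSd i u v / L i u v).
transitivity (\sum_x pi x * (\sum_(v : Ts X S i) PSd i (restr (S i) x) v * G (restr (S i) x) v)).
  apply: eq_bigr => x _.
  rewrite -(sum_prod_one hpart (f := fun j v => PSd j (restr (S j) x) v) (i := i) (G (restr (S i) x))).
    by rewrite mulr_sumr; apply: eq_bigr => y _; rewrite mulrA.
  by move=> j _; case: (PS_trans hpi hP (S j)) => _ ->.
rewrite (M1 pi (S0 := S i) (fun u => \sum_v PSd i u v * G u v)).
rewrite /KRi; apply: eq_bigr => u _; rewrite mulr_sumr; apply: eq_bigr => v _.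
by rewrite mulrA.
Qed.


Lemma bad_ex (L : forall i : 'I_n, Ts X S i -> Ts X S i -> R) : ~~ Good L -> exists i u v, PSd i u v != 0 /\ L i u v = 0.
Proof.
move=> /forallPn [i] /forallPn [u] /forallPn [v].
by rewrite negb_imply negbK => /andP[h1 /eqP h2]; exists i, u, v.
Qed.

Lemma tens_zero (L : forall i : 'I_n, Ts X S i -> Ts X S i -> R) i x y :
  L i (restr (S i) x) (restr (S i) y) = 0 -> tens L x y = 0.
Proof. by move=> h; apply/eqP/prodf_eq0; exists i => //; rewrite h. Qed.

Lemma B1 (L : forall i : 'I_n, Ts X S i -> Ts X S i -> R) : ~~ Good L -> KLdiv pi P (tens L) = +oo%E.
Proof.
move=> /bad_ex [i [u [v [h1 h2]]]].
case: (N_ex h1) => x [y [hx hy hxy]].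
by apply: (KLdiv_oo hxy); apply: (tens_zero (i := i)); rewrite hx hy.
Qed.

Lemma B2 (L : forall i : 'I_n, Ts X S i -> Ts X S i -> R) : ~~ Good L -> KLdiv pi (tens PSd) (tens L) = +oo%E.
Proof.
move=> /bad_ex [i [u [v [h1 h2]]]].
case: (full_inhab hpi) => x0 _; case: (ext_ex u x0) => x hx.
have hs : \sum_(y : full X) (\prod_j PSd j (restr (S j) x) (restr (S j) y)) *
            (restr (S i) y == v)%:R = PSd i u v.
  rewrite (sum_prod_one hpart (f := fun j w => PSd j (restr (S j) x) w) (i := i)
             (fun w => (w == v)%:R)).
    rewrite (bigD1 v) //= eqxx mulr1 big1 ?addr0 ?hx // => w /negbTE ->.
    by rewrite mulr0.
  by move=> j _; case: (PS_trans hpi hP (S j)) => _ ->.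
have /existsP [y hy] : [exists y : full X, (\prod_j PSd j (restr (S j) x) (restr (S j) y)) *
            (restr (S i) y == v)%:R != 0].
  apply: contraNT h1 => /existsPn hn; rewrite -hs; apply/eqP; apply: big1 => y _.
  by move: (hn y); rewrite negbK => /eqP.
move: hy; rewrite mulf_eq0 negb_or => /andP[hp hv].
have hyv : restr (S i) y = v.
  by move: hv; case: (restr (S i) y =P v) => // _; rewrite /= eqxx.
apply: (@KLdiv_oo _ _ _ _ _ x y).
  by rewrite mulf_neq0 // gt_eqF //; case: hpi => ->.
by apply: (tens_zero (i := i)); rewrite hx hyv.
Qed.

Lemma B3 (L : forall i : 'I_n, Ts X S i -> Ts X S i -> R) : ~~ Good L ->
  (\sum_i KLdiv (marg (S i) pi) (PSd i) (L i) = +oo)%E.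
Proof.
move=> /bad_ex [i [u [v [h1 h2]]]].
apply: (@esum_oo _ _ _ i) => [j|]; first exact: KLdiv_nNy.
apply: (@KLdiv_oo _ _ _ _ _ u v) => //.
by rewrite mulf_neq0 // gt_eqF // marg_gt0.
Qed.

Lemma ident (L : forall i : 'I_n, Ts X S i -> Ts X S i -> R) : (forall i, is_trans (L i)) ->
  (KLdiv pi P (tens L) = KLdiv pi P (tens PSd) + KLdiv pi (tens PSd) (tens L))%E /\
  (KLdiv pi P (tens L) = KLdiv pi P (tens PSd)
       + \sum_(i < n) KLdiv (marg (S i) pi) (PSd i) (L i))%E.
Proof.
move=> hL; case: (boolP (Good L)) => g.
  rewrite (E1 g) E0 (E2 g) (eq_bigr (fun i => (KRi L i)%:E)); last by move=> i _; exact: Ei.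
  by rewrite sumEFin -!EFinD R1 // R2.
by rewrite (B1 g) (B2 g) (B3 g) E0 !addey.
Qed.

Lemma minim (L : forall i : 'I_n, Ts X S i -> Ts X S i -> R) : (forall i, is_trans (L i)) ->
  (KLdiv pi P (tens PSd) <= KLdiv pi P (tens L))%E /\
  (KLdiv pi P (tens L) = KLdiv pi P (tens PSd) -> forall x y, tens L x y = tens PSd x y).
Proof.
move=> hL; case: (boolP (Good L)) => g; last by rewrite (B1 g) E0; split => //; apply: leey.
have G i := gibbs (a := marg (S i) pi) (p := PSd i) (q := L i) (marg_gt0 hpi (S0 := S i))
    (PS_trans hpi hP (S i)) (hL i) (goodP g (i := i)).
rewrite (E1 g) E0 lee_fin R1 //; split.
  by rewrite lerDl; apply: sumr_ge0 => i _; case: (G i).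
move=> [] e.
have hs : \sum_i KRi L i = 0 by apply: (addrI KR0); rewrite addr0.
have hz := psumr_eq0P (fun i _ => proj1 (G i)) hs.
move=> x y; apply: eq_bigr => i _.
by case: (G i) => _ /(_ (hz i isT)).
Qed.

End Main.

Unset Implicit Arguments.
Set Strict Implicit.

Theorem theorem2p22 (R : realType) (d n : nat) (X : 'I_d -> finType)
  (S : 'I_n -> {set 'I_d}) (pi : full X -> R) (P : full X -> full X -> R)
  (L : forall i : 'I_n, sub X (S i) -> sub X (S i) -> R) :
  is_partition S -> is_pos_pmf pi -> is_trans P ->
  (forall i, is_trans (L i)) ->
  let PS := fun i : 'I_n => Pmarg (S i) pi P in
  (KLdiv pi P (tens L)
     = KLdiv pi P (tens PS) + KLdiv pi (tens PS) (tens L))%E /\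
  (KLdiv pi P (tens L)
     = KLdiv pi P (tens PS)
       + \sum_(i < n) KLdiv (marg (S i) pi) (PS i) (L i))%E /\
  (* consequently: tens PS is the unique minimizer, with minimum value
     KLdiv pi P (tens PS) *)
  (forall i, is_trans (PS i)) /\
  (forall L' : forall i : 'I_n, sub X (S i) -> sub X (S i) -> R,
     (forall i, is_trans (L' i)) ->
     (KLdiv pi P (tens PS) <= KLdiv pi P (tens L'))%E /\
     (KLdiv pi P (tens L') = KLdiv pi P (tens PS) ->
        forall x y, tens L' x y = tens PS x y)).
Proof.
move=> hpart hpi hP hL PS.
have [i1 i2] := ident hpart hpi hP hL.
split; first exact: i1.
split; first exact: i2.
split; first by move=> i; exact: PS_trans.
move=> L' hL'; case: (minim hpi hP hL') => m1 m2; split; [exact: m1 | exact: m2].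
Qed.
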